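(* If $n$ is odd, then $K_n$ can be (smoothly) embedded in $\mathbb{R}^{n+1}$.
   Context: $K_n=(S^1)^n/\bigl((z_1,\ldots,z_{n-1},z_n)\sim(\overline{z}_1,\ldots,\overline{z}_{n-1},-z_n)\bigr)$, where $S^1\subset\mathbb{C}$ is the unit circle and $\overline{z}$ is complex conjugation. *)

(* Defs.v *)
From Stdlib Require Import Reals ZArith Arith.
Open Scope R_scope.

(* Points of R^m are represented as functions nat -> R (only the first m
   coordinates matter). A point of the torus (S^1)^n is given by angle
   coordinates theta_0..theta_{n-1}, with z_i = exp(i theta_i). *)
Definition vec := nat -> R.

Definition upd (x : vec) (i : nat) (t : R) : vec :=
  fun k => if Nat.eqb k i then t else x k.

Fixpoint rsum (n : nat) (f : nat -> R) : R :=
  match n with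
  | O => 0
  | S m => rsum m f + f m
  end.

Definition dep_first (n : nat) (f : vec -> R) : Prop :=
  forall x y : vec, (forall i, (i < n)%nat -> x i = y i) -> f x = f y.

Definition cont_n (n : nat) (f : vec -> R) : Prop :=
  forall (x : vec) (eps : R), 0 < eps ->
    exists delta, 0 < delta /\
      forall y : vec, (forall i, (i < n)%nat -> Rabs (y i - x i) < delta) ->
        Rabs (f y - f x) < eps.

Fixpoint Ck (n k : nat) (f : vec -> R) : Prop :=
  match k with
  | O => cont_n n f
  | S k' => cont_n n f /\
      forall i, (i < n)%nat ->
        exists g : vec -> R,
          (forall x : vec, derivable_pt_lim (fun t => f (upd x i t)) (x i) (g x))
          /\ Ck n k' g
  end.

Definition smooth_n (n : nat) (f : vec -> R) : Prop :=
  dep_first n f /\ forall k, Ck n k f.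

Definition same_angle (a b : R) : Prop :=
  exists k : Z, b = a + 2 * PI * IZR k.

(* The equivalence relation on R^n whose quotient is K_n:
   theta ~ theta' iff they give the same point of (S^1)^n, or
   theta' gives (conj z_1, ..., conj z_{n-1}, - z_n) where z = point of theta. *)
Definition K_equiv (n : nat) (x y : vec) : Prop :=
  (forall i, (i < n)%nat -> same_angle (x i) (y i)) \/
  ((forall i, (i < n - 1)%nat -> same_angle (- x i) (y i)) /\
   same_angle (x (n - 1)%nat + PI) (y (n - 1)%nat)).

(* F (in angle coordinates) induces a smooth embedding K_n -> R^(n+1):
   smooth lift, constant on classes (well defined on K_n), injective on K_n,
   and an immersion (Jacobian of rank n).  Since K_n is compact, an injective
   immersion is a smooth embedding. *)
Definition smooth_embedding_K (n : nat) (F : vec -> vec) : Prop :=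
  (forall j, (j < n + 1)%nat -> smooth_n n (fun x => F x j)) /\
  (forall x y : vec, K_equiv n x y -> forall j, (j < n + 1)%nat -> F x j = F y j) /\
  (forall x y : vec, (forall j, (j < n + 1)%nat -> F x j = F y j) -> K_equiv n x y) /\
  (forall (x : vec) (D : nat -> nat -> R),
     (forall j i, (j < n + 1)%nat -> (i < n)%nat ->
        derivable_pt_lim (fun t => F (upd x i t) j) (x i) (D j i)) ->
     forall c : nat -> R,
       (forall j, (j < n + 1)%nat -> rsum n (fun i => c i * D j i) = 0) ->
       forall i, (i < n)%nat -> c i = 0).

(* Main.v *)
Require Import Defs.
From Stdlib Require Import Reals ZArith Arith.
From Stdlib Require Import Lia Lra FunctionalExtensionality.
Open Scope R_scope.


Lemma cos_sin_Z (a : R) (k : Z) :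
  cos (a + 2 * PI * IZR k) = cos a /\ sin (a + 2 * PI * IZR k) = sin a.
Proof.
  destruct (Z_le_gt_dec 0 k) as [Hk|Hk].
  - rewrite <- (Z2Nat.id k Hk). rewrite <- INR_IZR_INZ.
    replace (a + 2 * PI * INR (Z.to_nat k)) with (a + 2 * INR (Z.to_nat k) * PI) by ring.
    split; [apply cos_period | apply sin_period].
  - assert (Hk' : (0 <= - k)%Z) by lia.
    replace k with (- (Z.of_nat (Z.to_nat (- k))))%Z by (rewrite Z2Nat.id; lia).
    rewrite opp_IZR, <- INR_IZR_INZ.
    set (m := Z.to_nat (-k)).
    set (b := a + 2 * PI * - INR m).
    assert (Ha : a = b + 2 * INR m * PI) by (unfold b; ring).
    rewrite Ha. rewrite cos_period, sin_period. split; reflexivity.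
Qed.

Lemma same_angle_cs (a b : R) : same_angle a b -> cos b = cos a /\ sin b = sin a.
Proof. intros [k ->]. apply cos_sin_Z. Qed.

Lemma cs_same_angle (u v : R) : cos u = cos v -> sin u = sin v -> same_angle u v.
Proof.
  intros Hc Hs.
  assert (Hsd : sin (v - u) = 0) by (rewrite sin_minus, Hc, Hs; ring).
  assert (Hcd : cos (v - u) = 1).
  { rewrite cos_minus, <- Hc, <- Hs. rewrite Rplus_comm. 
    pose proof (sin2_cos2 u) as H. unfold Rsqr in H. lra. }
  destruct (sin_eq_0_0 _ Hsd) as [k Hk].
  destruct (Z.Even_or_Odd k) as [[j Hj]|[j Hj]]; subst k.
  - exists j. rewrite mult_IZR in Hk. lra.
  - exfalso. rewrite plus_IZR, mult_IZR in Hk.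
    replace (v - u) with (PI + 2 * PI * IZR j) in Hcd by lra.
    rewrite (proj1 (cos_sin_Z PI j)), cos_PI in Hcd. lra.
Qed.


Definition PD (f : vec -> R) (i : nat) (g : vec -> R) : Prop :=
  forall x, derivable_pt_lim (fun t => f (upd x i t)) (x i) (g x).

Lemma upd_same x i : upd x i (x i) = x.
Proof. apply functional_extensionality; intro k; unfold upd.
  destruct (Nat.eqb_spec k i); subst; auto. Qed.

Lemma PD_plus f g f' g' h i : PD f i f' -> PD g i g' ->
  (forall x, h x = f' x + g' x) -> PD (fun x => f x + g x) i h.
Proof. intros H1 H2 H3 x. rewrite H3.
  exact (derivable_pt_lim_plus _ _ _ _ _ (H1 x) (H2 x)). Qed.

Lemma PD_mult f g f' g' h i : PD f i f' -> PD g i g' ->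
  (forall x, h x = f' x * g x + f x * g' x) -> PD (fun x => f x * g x) i h.
Proof. intros H1 H2 H3 x. rewrite H3.
  pose proof (derivable_pt_lim_mult _ _ _ _ _ (H1 x) (H2 x)) as H.
  cbv beta in H; rewrite upd_same in H. exact H. Qed.

Lemma PD_sin f f' h i : PD f i f' ->
  (forall x, h x = cos (f x) * f' x) -> PD (fun x => sin (f x)) i h.
Proof. intros H1 H3 x. rewrite H3.
  pose proof (derivable_pt_lim_comp (fun t => f (upd x i t)) sin _ _ _ (H1 x)
     (derivable_pt_lim_sin _)) as H.
  cbv beta in H; rewrite upd_same in H. exact H. Qed.

Lemma PD_cos f f' h i : PD f i f' ->
  (forall x, h x = - sin (f x) * f' x) -> PD (fun x => cos (f x)) i h.
Proof. intros H1 H3 x. rewrite H3.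
  pose proof (derivable_pt_lim_comp (fun t => f (upd x i t)) cos _ _ _ (H1 x)
     (derivable_pt_lim_cos _)) as H.
  cbv beta in H; rewrite upd_same in H. exact H. Qed.

Lemma PD_const c i : PD (fun _ => c) i (fun _ => 0).
Proof. intro x. apply derivable_pt_lim_const. Qed.

Lemma PD_proj j i : PD (fun x => x j) i (fun _ => if Nat.eqb j i then 1 else 0).
Proof. intro x. unfold upd. destruct (Nat.eqb j i) eqn:E.
  - apply Nat.eqb_eq in E; subst. apply derivable_pt_lim_id.
  - apply derivable_pt_lim_const. Qed.

Lemma cont_const n c : cont_n n (fun _ => c).
Proof. intros x eps He. exists 1. split; [lra|]. intros y _.
  replace (c - c) with 0 by ring. rewrite Rabs_R0. exact He. Qed.

Lemma cont_proj n j : (j < n)%nat -> cont_n n (fun x => x j).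
Proof. intros Hj x eps He. exists eps. split; [exact He|]. intros y Hy. apply Hy, Hj. Qed.

Lemma cont_plus n f g : cont_n n f -> cont_n n g -> cont_n n (fun x => f x + g x).
Proof. intros Hf Hg x eps He.
  destruct (Hf x (eps/2)) as [d1 [Hd1 H1]]; [lra|].
  destruct (Hg x (eps/2)) as [d2 [Hd2 H2]]; [lra|].
  exists (Rmin d1 d2). split; [apply Rmin_pos; auto|].
  intros y Hy.
  assert (A1 := H1 y (fun i Hi => Rlt_le_trans _ _ _ (Hy i Hi) (Rmin_l _ _))).
  assert (A2 := H2 y (fun i Hi => Rlt_le_trans _ _ _ (Hy i Hi) (Rmin_r _ _))).
  replace (f y + g y - (f x + g x)) with ((f y - f x) + (g y - g x)) by ring.
  eapply Rle_lt_trans; [apply Rabs_triang|]. lra. Qed.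

Lemma cont_comp n f g : cont_n n f -> continuity g -> cont_n n (fun x => g (f x)).
Proof. intros Hf Hg x eps He.
  specialize (Hg (f x)). unfold continuity_pt, continue_in, limit1_in, limit_in in Hg.
  destruct (Hg eps He) as [a [Ha Hga]].
  destruct (Hf x a Ha) as [d [Hd H]].
  exists d. split; [exact Hd|]. intros y Hy.
  destruct (Req_dec (f x) (f y)) as [E|E].
  { rewrite E. replace (g (f y) - g (f y)) with 0 by ring. rewrite Rabs_R0. exact He. }
  apply (Hga (f y)). split; [split; [exact I| exact E]|]. simpl. unfold R_dist. apply H, Hy. Qed.

Lemma cont_sq4 : continuity (fun u => u * u / 4).
Proof. intro u. apply continuity_pt_div. apply continuity_pt_mult; apply derivable_continuous_pt, derivable_pt_id.
    apply continuity_pt_const. intros a b; auto. lra. Qed.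

Lemma cont_mult n f g : cont_n n f -> cont_n n g -> cont_n n (fun x => f x * g x).
Proof. intros Hf Hg.
  assert (E : (fun x => f x * g x) =
    (fun x => (fun u => u * u / 4) (f x + g x) + (fun u => - (u * u / 4)) (f x + (fun u => -u) (g x)))).
  { apply functional_extensionality; intro x; field. }
  rewrite E. apply (cont_plus n (fun x => (fun u => u * u / 4) (f x + g x))
     (fun x => (fun u => - (u * u / 4)) (f x + (fun u => -u) (g x)))).
  - refine (cont_comp n (fun x => f x + g x) (fun u => u*u/4) _ cont_sq4). apply cont_plus; auto.
  - refine (cont_comp n (fun x => f x + (fun u => -u) (g x)) (fun u => - (u*u/4)) _ _).
    + refine (cont_plus n f (fun x => (fun u => -u) (g x)) Hf _).
      refine (cont_comp n g (fun u => -u) Hg _). apply continuity_opp, derivable_continuous, derivable_id.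
    + apply (continuity_opp (fun u => u * u / 4)). apply cont_sq4.
Qed.

Lemma Ck_cont n d f : Ck n d f -> cont_n n f.
Proof. destruct d; simpl; tauto. Qed.

Lemma Ck_mono n d : forall f, Ck n (S d) f -> Ck n d f.
Proof. induction d as [|d IH]; intros f [Hc Hp]. exact Hc. split; [exact Hc|].
  intros i Hi. destruct (Hp i Hi) as [g [Hg Hgc]]. exists g; split; auto. Qed.

Lemma Ck_const n d : forall c, Ck n d (fun _ => c).
Proof. induction d as [|d IH]; intro c; simpl. apply cont_const.
  split. apply cont_const. intros i Hi. exists (fun _ => 0). split.
  exact (PD_const c i). apply IH. Qed.

Lemma Ck_proj n d j : (j < n)%nat -> Ck n d (fun x => x j).
Proof. intro Hj. destruct d; simpl. apply cont_proj; auto.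
  split. apply cont_proj; auto. intros i Hi. eexists; split.
  exact (PD_proj j i). apply Ck_const. Qed.

Lemma Ck_plus n d : forall f g, Ck n d f -> Ck n d g -> Ck n d (fun x => f x + g x).
Proof. induction d as [|d IH]; intros f g Hf Hg. simpl in *. apply cont_plus; auto.
  destruct Hf as [Hfc Hfp], Hg as [Hgc Hgp]. split. apply cont_plus; auto.
  intros i Hi. destruct (Hfp i Hi) as [f' [Hf' Cf']], (Hgp i Hi) as [g' [Hg' Cg']].
  exists (fun x => f' x + g' x). split.
  exact (PD_plus f g f' g' _ i Hf' Hg' (fun x => eq_refl)). apply IH; auto. Qed.

Lemma Ck_mult n d : forall f g, Ck n d f -> Ck n d g -> Ck n d (fun x => f x * g x).
Proof. induction d as [|d IH]; intros f g Hf Hg. simpl in *. apply cont_mult; auto.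
  pose proof (Ck_mono _ _ _ Hf) as Mf. pose proof (Ck_mono _ _ _ Hg) as Mg.
  destruct Hf as [Hfc Hfp], Hg as [Hgc Hgp]. split. apply cont_mult; auto.
  intros i Hi. destruct (Hfp i Hi) as [f' [Hf' Cf']], (Hgp i Hi) as [g' [Hg' Cg']].
  exists (fun x => f' x * g x + f x * g' x). split.
  exact (PD_mult f g f' g' _ i Hf' Hg' (fun x => eq_refl)).
  apply (Ck_plus n d (fun x => f' x * g x) (fun x => f x * g' x)); apply IH; auto. Qed.

Lemma Ck_opp n d f : Ck n d f -> Ck n d (fun x => - f x).
Proof. intro H. replace (fun x => - f x) with (fun x => (fun _ => -1) x * f x).
  apply Ck_mult; auto. apply Ck_const.
  apply functional_extensionality; intro; ring. Qed.

Lemma Ck_sincos n d : forall f, Ck n d f ->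
  Ck n d (fun x => sin (f x)) /\ Ck n d (fun x => cos (f x)).
Proof. induction d as [|d IH]; intros f Hf.
  - simpl in *. split.
    + exact (cont_comp n f sin Hf continuity_sin).
    + exact (cont_comp n f cos Hf continuity_cos).
  - destruct (IH f (Ck_mono _ _ _ Hf)) as [Cs Cc].
    destruct Hf as [Hfc Hfp]. split; split.
    + exact (cont_comp n f sin Hfc continuity_sin).
    + intros i Hi. destruct (Hfp i Hi) as [f' [Hf' Cf']].
      exists (fun x => cos (f x) * f' x). split.
      exact (PD_sin f f' _ i Hf' (fun x => eq_refl)).
      apply (Ck_mult n d (fun x => cos (f x)) f'); auto.
    + exact (cont_comp n f cos Hfc continuity_cos).
    + intros i Hi. destruct (Hfp i Hi) as [f' [Hf' Cf']].
      exists (fun x => - sin (f x) * f' x). split.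
      exact (PD_cos f f' _ i Hf' (fun x => eq_refl)).
      apply (Ck_mult n d (fun x => - sin (f x)) f'); auto.
      apply (Ck_opp n d (fun x => sin (f x))); auto.
Qed.

Definition Sm n f := forall d, Ck n d f.
Lemma Sm_const n c : Sm n (fun _ => c). Proof. intro d; apply Ck_const. Qed.
Lemma Sm_proj n j : (j < n)%nat -> Sm n (fun x => x j). Proof. intros H d; apply Ck_proj; auto. Qed.
Lemma Sm_plus n f g : Sm n f -> Sm n g -> Sm n (fun x => f x + g x).
Proof. intros H1 H2 d; apply Ck_plus; auto. Qed.
Lemma Sm_mult n f g : Sm n f -> Sm n g -> Sm n (fun x => f x * g x).
Proof. intros H1 H2 d; apply Ck_mult; auto. Qed.
Lemma Sm_opp n f : Sm n f -> Sm n (fun x => - f x).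
Proof. intros H1 d; apply Ck_opp; auto. Qed.
Lemma Sm_sin n f : Sm n f -> Sm n (fun x => sin (f x)).
Proof. intros H1 d; apply Ck_sincos; auto. Qed.
Lemma Sm_cos n f : Sm n f -> Sm n (fun x => cos (f x)).
Proof. intros H1 d; apply Ck_sincos; auto. Qed.


Fixpoint r (k : nat) (x : vec) : R :=
  match k with O => 1 | S k' => 2 + r k' x * cos (x k') * / 3 end.
Definition s (k : nat) (x : vec) : R := r k x * sin (x k).
Definition dx (j i : nat) : R := if Nat.eqb j i then 1 else 0.
Fixpoint dr (k i : nat) (x : vec) : R :=
  match k with O => 0
  | S k' => (dr k' i x * cos (x k') + r k' x * (- sin (x k') * dx k' i)) * / 3 end.
Definition ds (k i : nat) (x : vec) : R :=
  dr k i x * sin (x k) + r k x * (cos (x k) * dx k i).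

Lemma r_bound k x : 1 <= r k x <= 3.
Proof. induction k as [|k IH]; simpl. lra.
  pose proof (COS_bound (x k)) as Hc.
  assert (-3 <= r k x * cos (x k) <= 3) by nra. lra. Qed.

Lemma PD_r k i : PD (r k) i (dr k i).
Proof. induction k as [|k IH].
  - exact (PD_const 1 i).
  - change (PD (fun x => 2 + r k x * cos (x k) * / 3) i (dr (S k) i)).
    refine (PD_plus (fun _ => 2) (fun x => r k x * cos (x k) * / 3) _ _ _ i (PD_const 2 i) _ _).
    + refine (PD_mult (fun x => r k x * cos (x k)) (fun _ => / 3) _ _ _ i _ (PD_const _ i) _).
      * refine (PD_mult (r k) (fun x => cos (x k)) _ _ _ i IH _ (fun x => eq_refl)).
        exact (PD_cos (fun x => x k) _ _ i (PD_proj k i) (fun x => eq_refl)).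
      * intro x. reflexivity.
    + intro x. simpl. unfold dx. ring.
Qed.

Lemma PD_s k i : PD (s k) i (ds k i).
Proof. unfold s.
  refine (PD_mult (r k) (fun x => sin (x k)) _ _ _ i (PD_r k i) _ (fun x => eq_refl)).
  exact (PD_sin (fun x => x k) _ _ i (PD_proj k i) (fun x => eq_refl)).
Qed.

Lemma Sm_r n k : (k <= n)%nat -> Sm n (r k).
Proof. induction k as [|k IH]; intro Hk.
  - exact (Sm_const n 1).
  - change (Sm n (fun x => 2 + r k x * cos (x k) * / 3)).
    apply (Sm_plus n (fun _ => 2)); [apply Sm_const|].
    apply (Sm_mult n (fun x => r k x * cos (x k)) (fun _ => / 3)); [|apply Sm_const].
    apply (Sm_mult n (r k) (fun x => cos (x k))). apply IH; lia.
    apply (Sm_cos n (fun x => x k)). apply Sm_proj; lia.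
Qed.

Lemma Sm_s n k : (k < n)%nat -> Sm n (s k).
Proof. intro Hk. unfold s. apply (Sm_mult n (r k) (fun x => sin (x k))).
  apply Sm_r; lia. apply (Sm_sin n (fun x => x k)). apply Sm_proj; lia. Qed.

Lemma r_dep k x y : (forall i, (i < k)%nat -> x i = y i) -> r k x = r k y.
Proof. induction k as [|k IH]; intro H; simpl. reflexivity.
  rewrite IH by (intros; apply H; lia). rewrite (H k) by lia. reflexivity. Qed.

Lemma s_dep k x y : (forall i, (i <= k)%nat -> x i = y i) -> s k x = s k y.
Proof. intro H. unfold s. rewrite (r_dep k x y) by (intros; apply H; lia).
  rewrite (H k) by lia. reflexivity. Qed.

Lemma r_cong k x y : (forall i, (i < k)%nat -> cos (y i) = cos (x i)) -> r k y = r k x.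
Proof. induction k as [|k IH]; intro H; simpl. reflexivity.
  rewrite IH by (intros; apply H; lia). rewrite (H k) by lia. reflexivity. Qed.

Lemma rsum_ext n f g : (forall i, (i < n)%nat -> f i = g i) -> rsum n f = rsum n g.
Proof. induction n as [|n IH]; intro H; simpl. reflexivity.
  rewrite IH by (intros; apply H; lia). rewrite H by lia. reflexivity. Qed.

Lemma rsum_lin2 n (c A B : nat -> R) a b :
  rsum n (fun i => c i * (A i * a + B i * b)) =
  rsum n (fun i => c i * A i) * a + rsum n (fun i => c i * B i) * b.
Proof. induction n as [|n IH]; simpl. ring. rewrite IH. ring. Qed.

Lemma rsum_lin3 n (c A B C : nat -> R) a b d :
  rsum n (fun i => c i * (A i * a + B i * b + C i * d)) =
  rsum n (fun i => c i * A i) * a + rsum n (fun i => c i * B i) * b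
  + rsum n (fun i => c i * C i) * d.
Proof. induction n as [|n IH]; simpl. ring. rewrite IH. ring. Qed.

Lemma rsum_zero n : rsum n (fun _ => 0) = 0.
Proof. induction n; simpl. reflexivity. rewrite IHn. ring. Qed.

Lemma rsum_dx n c k : (k < n)%nat -> rsum n (fun i => c i * dx k i) = c k.
Proof. induction n as [|n IH]; intro Hk; simpl. lia.
  unfold dx at 2. destruct (Nat.eqb_spec k n).
  - subst. rewrite (rsum_ext _ _ (fun _ => 0)).
    + rewrite rsum_zero. ring.
    + intros i Hi. unfold dx. destruct (Nat.eqb_spec n i). lia. ring.
  - rewrite IH by lia. ring. Qed.


Definition FF (m : nat) (x : vec) (j : nat) : R :=
  match j with
  | O => r m x * cos (2 * x m)
  | 1%nat => r m x * sin (2 * x m)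
  | S (S q) => if Nat.even q then s q x * cos (x m) + - (s (S q) x * sin (x m))
               else s (pred q) x * sin (x m) + s q x * cos (x m)
  end.

Lemma PD_2xm m i : PD (fun x => 2 * x m) i (fun x => 2 * dx m i).
Proof. refine (PD_mult (fun _ => 2) (fun x => x m) _ _ _ i (PD_const 2 i) (PD_proj m i) _).
  intro x. unfold dx. ring. Qed.

Lemma PD_FF0 m i : PD (fun x => FF m x 0) i
  (fun x => dr m i x * cos (2 * x m) + dx m i * (-2 * r m x * sin (2 * x m))).
Proof. change (PD (fun x => r m x * cos (2 * x m)) i
  (fun x => dr m i x * cos (2 * x m) + dx m i * (-2 * r m x * sin (2 * x m)))).
  refine (PD_mult (r m) (fun x => cos (2 * x m)) _ _ _ i (PD_r m i)
    (PD_cos _ _ _ i (PD_2xm m i) (fun x => eq_refl)) _).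
  intro x. ring. Qed.

Lemma PD_FF1 m i : PD (fun x => FF m x 1) i
  (fun x => dr m i x * sin (2 * x m) + dx m i * (2 * r m x * cos (2 * x m))).
Proof. change (PD (fun x => r m x * sin (2 * x m)) i
  (fun x => dr m i x * sin (2 * x m) + dx m i * (2 * r m x * cos (2 * x m)))).
  refine (PD_mult (r m) (fun x => sin (2 * x m)) _ _ _ i (PD_r m i)
    (PD_sin _ _ _ i (PD_2xm m i) (fun x => eq_refl)) _).
  intro x. ring. Qed.

Lemma PD_FFev m q i : Nat.even q = true -> PD (fun x => FF m x (S (S q))) i
  (fun x => ds q i x * cos (x m) + ds (S q) i x * (- sin (x m))
            + dx m i * (- (s q x * sin (x m)) - s (S q) x * cos (x m))).
Proof. intro Hq.
  replace (fun x => FF m x (S (S q))) with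
    (fun x => s q x * cos (x m) + - (s (S q) x * sin (x m))).
  2:{ apply functional_extensionality; intro x. simpl. rewrite Hq. reflexivity. }
  refine (PD_plus (fun x => s q x * cos (x m)) (fun x => - (s (S q) x * sin (x m))) _ _ _ i
    (PD_mult (s q) (fun x => cos (x m)) _ _ _ i (PD_s q i)
       (PD_cos _ _ _ i (PD_proj m i) (fun x => eq_refl)) (fun x => eq_refl)) _ _).
  - replace (fun x => - (s (S q) x * sin (x m))) with
      (fun x => (fun _ => -1) x * (s (S q) x * sin (x m))) by
      (apply functional_extensionality; intro; ring).
    refine (PD_mult (fun _ => -1) (fun x => s (S q) x * sin (x m)) _ _ _ i (PD_const _ i)
      (PD_mult (s (S q)) (fun x => sin (x m)) _ _ _ i (PD_s (S q) i)
       (PD_sin _ _ _ i (PD_proj m i) (fun x => eq_refl)) (fun x => eq_refl)) (fun x => eq_refl)).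
  - intro x. unfold dx. ring.
Qed.

Lemma PD_FFodd m q i : Nat.even q = false -> PD (fun x => FF m x (S (S q))) i
  (fun x => ds (pred q) i x * sin (x m) + ds q i x * cos (x m)
            + dx m i * (s (pred q) x * cos (x m) - s q x * sin (x m))).
Proof. intro Hq.
  replace (fun x => FF m x (S (S q))) with
    (fun x => s (pred q) x * sin (x m) + s q x * cos (x m)).
  2:{ apply functional_extensionality; intro x. simpl. rewrite Hq. reflexivity. }
  refine (PD_plus (fun x => s (pred q) x * sin (x m)) (fun x => s q x * cos (x m)) _ _ _ i
    (PD_mult (s (pred q)) (fun x => sin (x m)) _ _ _ i (PD_s (pred q) i)
       (PD_sin _ _ _ i (PD_proj m i) (fun x => eq_refl)) (fun x => eq_refl))
    (PD_mult (s q) (fun x => cos (x m)) _ _ _ i (PD_s q i)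
       (PD_cos _ _ _ i (PD_proj m i) (fun x => eq_refl)) (fun x => eq_refl)) _).
  intro x. unfold dx. ring.
Qed.

Lemma even_succ_lt h q : Nat.even q = true -> (q < 2 * h)%nat -> (S q < 2 * h)%nat.
Proof. intros He Hq. apply Nat.even_spec in He. destruct He as [a ->]. lia. Qed.

Lemma odd_pos q : Nat.even q = false -> (0 < q)%nat.
Proof. destruct q; simpl; [discriminate| lia]. Qed.


Lemma sc1 a : cos a * cos a + sin a * sin a = 1.
Proof. pose proof (sin2_cos2 a) as H. unfold Rsqr in H. lra. Qed.

Lemma rot_zero u v C S : C * C + S * S = 1 -> u * C - v * S = 0 -> u * S + v * C = 0 ->
  u = 0 /\ v = 0.
Proof. intros H1 H2 H3. split.
  - transitivity ((u * C - v * S) * C + (u * S + v * C) * S).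
    + transitivity (u * (C * C + S * S)). rewrite H1; ring. ring.
    + rewrite H2, H3. ring.
  - transitivity (- (u * C - v * S) * S + (u * S + v * C) * C).
    + transitivity (v * (C * C + S * S)). rewrite H1; ring. ring.
    + rewrite H2, H3. ring.
Qed.

Lemma rot_inv a b a' b' C S e : C * C + S * S = 1 -> e * e = 1 ->
  a * C + - (b * S) = a' * (e * C) + - (b' * (e * S)) ->
  a * S + b * C = a' * (e * S) + b' * (e * C) -> a' = e * a /\ b' = e * b.
Proof. intros H1 H2 H3 H4.
  assert (Ha : a = e * a').
  { transitivity ((a * C + - (b * S)) * C + (a * S + b * C) * S).
    + transitivity (a * (C * C + S * S)). rewrite H1; ring. ring.
    + rewrite H3, H4. transitivity (e * a' * (C * C + S * S)). ring. rewrite H1; ring. }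
  assert (Hb : b = e * b').
  { transitivity (- (a * C + - (b * S)) * S + (a * S + b * C) * C).
    + transitivity (b * (C * C + S * S)). rewrite H1; ring. ring.
    + rewrite H3, H4. transitivity (e * b' * (C * C + S * S)). ring. rewrite H1; ring. }
  split.
  - rewrite Ha. transitivity ((e * e) * a'). rewrite H2; ring. ring.
  - rewrite Hb. transitivity ((e * e) * b'). rewrite H2; ring. ring.
Qed.

Lemma polar_eq r1 r2 a b e : 0 < r1 -> 0 < r2 -> e * e = 1 ->
  r1 * cos a = r2 * cos b -> r1 * sin a = e * (r2 * sin b) ->
  r1 = r2 /\ cos a = cos b /\ sin a = e * sin b.
Proof. intros P1 P2 He Hc Hs.
  assert (Hsq : r1 * r1 = r2 * r2).
  { transitivity ((r1 * cos a) * (r1 * cos a) + (r1 * sin a) * (r1 * sin a)).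
    + transitivity (r1 * r1 * (cos a * cos a + sin a * sin a)). rewrite sc1; ring. ring.
    + rewrite Hc, Hs. transitivity (r2 * r2 * (cos b * cos b + (e * e) * (sin b * sin b))).
      ring. rewrite He, Rmult_1_l, sc1. ring. }
  assert (Hr : r1 = r2) by nra.
  subst r2. split; [reflexivity|]. split.
  - apply (Rmult_eq_reg_l r1); lra.
  - apply (Rmult_eq_reg_l r1); [rewrite Hs; ring| lra].
Qed.

Lemma down_step x y e k : e * e = 1 -> r (S k) x = r (S k) y -> s k y = e * s k x ->
  r k x = r k y /\ cos (y k) = cos (x k) /\ sin (y k) = e * sin (x k).
Proof. intros He Hr Hs. simpl in Hr. unfold s in Hs.
  assert (Hc : r k y * cos (y k) = r k x * cos (x k)).
  { apply (Rmult_eq_reg_r (/ 3)); [lra| apply Rinv_neq_0_compat; lra]. }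
  pose proof (r_bound k x). pose proof (r_bound k y).
  destruct (polar_eq (r k y) (r k x) (y k) (x k) e) as [A [B C]]; auto; try lra.
Qed.

Lemma down_all x y e m : e * e = 1 -> r m x = r m y ->
  (forall k, (k < m)%nat -> s k y = e * s k x) ->
  forall k, (k < m)%nat -> cos (y k) = cos (x k) /\ sin (y k) = e * sin (x k).
Proof. intros He Hm Hs.
  assert (Hr : forall j, (j <= m)%nat -> r (m - j) x = r (m - j) y).
  { induction j as [|j IH]; intro Hj. rewrite Nat.sub_0_r; auto.
    replace (m - j)%nat with (S (m - S j)) in IH by lia.
    apply (down_step x y e); auto. apply IH; lia. apply Hs; lia. }
  intros k Hk. pose proof (Hr (m - S k)%nat ltac:(lia)) as H.
  replace (m - (m - S k))%nat with (S k) in H by lia.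
  destruct (down_step x y e k He H (Hs k Hk)) as [_ [A B]]. auto.
Qed.

Definition rho (n : nat) (c : nat -> R) (x : vec) k := rsum n (fun i => c i * dr k i x).
Definition sig (n : nat) (c : nat -> R) (x : vec) k := rsum n (fun i => c i * ds k i x).

Lemma rho_S n c x k : (k < n)%nat -> rho n c x (S k) = (rho n c x k * cos (x k) + c k * (r k x * - sin (x k))) * / 3.
Proof. intro Hk. unfold rho.
  rewrite (rsum_ext n _ (fun i => c i * (dr k i x * (cos (x k) * / 3) + dx k i * (r k x * - sin (x k) * / 3))))
    by (intros; simpl; ring).
  rewrite (rsum_lin2 n c (fun i => dr k i x) (fun i => dx k i)), rsum_dx by exact Hk. ring. Qed.

Lemma sig_eq n c x k : (k < n)%nat -> sig n c x k = rho n c x k * sin (x k) + c k * (r k x * cos (x k)).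
Proof. intro Hk. unfold sig, rho.
  rewrite (rsum_ext n _ (fun i => c i * (dr k i x * sin (x k) + dx k i * (r k x * cos (x k)))))
    by (intros; unfold ds; ring).
  rewrite (rsum_lin2 n c (fun i => dr k i x) (fun i => dx k i)), rsum_dx by exact Hk. ring. Qed.

Lemma imm_step n c x k : (k < n)%nat -> rho n c x (S k) = 0 -> sig n c x k = 0 -> rho n c x k = 0 /\ c k = 0.
Proof. intros Hk H1 H2. rewrite rho_S in H1 by exact Hk. rewrite sig_eq in H2 by exact Hk.
  assert (H1' : rho n c x k * cos (x k) - c k * r k x * sin (x k) = 0).
  { apply (Rmult_eq_reg_r (/ 3)); [| apply Rinv_neq_0_compat; lra]. rewrite Rmult_0_l, <- H1. ring. }
  destruct (rot_zero (rho n c x k) (c k * r k x) (cos (x k)) (sin (x k))) as [A B].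
  - apply sc1.
  - exact H1'.
  - rewrite <- H2. ring.
  - split; auto. pose proof (r_bound k x). apply (Rmult_eq_reg_r (r k x)); [rewrite B; ring| lra].
Qed.

Lemma imm_all n c x m : (m < n)%nat -> rho n c x m = 0 -> (forall k, (k < m)%nat -> sig n c x k = 0) ->
  forall k, (k < m)%nat -> c k = 0.
Proof. intros Hmn Hm Hs.
  assert (Hr : forall j, (j <= m)%nat -> rho n c x (m - j) = 0).
  { induction j as [|j IH]; intro Hj. rewrite Nat.sub_0_r; auto.
    replace (m - j)%nat with (S (m - S j)) in IH by lia.
    apply (imm_step n c x (m - S j)); [lia| apply IH; lia| apply Hs; lia]. }
  intros k Hk. pose proof (Hr (m - S k)%nat ltac:(lia)) as H.
  replace (m - (m - S k))%nat with (S k) in H by lia.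
  apply (imm_step n c x k); auto; lia.
Qed.


Lemma FF_smooth h j : (j < S (2 * h) + 1)%nat -> smooth_n (S (2 * h)) (fun x => FF (2 * h) x j).
Proof. intro Hj. split.
  - intros x y H. assert (Hm : x (2 * h)%nat = y (2 * h)%nat) by (apply H; lia).
    destruct j as [|[|q]]; unfold FF; cbv beta iota.
    + rewrite (r_dep (2 * h) x y) by (intros; apply H; lia). rewrite Hm; reflexivity.
    + rewrite (r_dep (2 * h) x y) by (intros; apply H; lia). rewrite Hm; reflexivity.
    + assert (Hq : (q < 2 * h)%nat) by lia. destruct (Nat.even q) eqn:E.
      * pose proof (even_succ_lt h q E Hq).
        rewrite (s_dep q x y), (s_dep (S q) x y) by (intros; apply H; lia). rewrite Hm; reflexivity.
      * rewrite (s_dep (pred q) x y), (s_dep q x y) by (intros; apply H; lia). rewrite Hm; reflexivity.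
  - change (Sm (S (2 * h)) (fun x => FF (2 * h) x j)).
    destruct j as [|[|q]].
    + change (Sm (S (2 * h)) (fun x => r (2 * h) x * cos (2 * x (2 * h)%nat))).
      apply (Sm_mult _ (r (2 * h)) (fun x => cos (2 * x (2 * h)%nat))). apply Sm_r; lia.
      apply (Sm_cos _ (fun x => 2 * x (2 * h)%nat)).
      apply (Sm_mult _ (fun _ => 2) (fun x => x (2 * h)%nat)). apply Sm_const. apply Sm_proj; lia.
    + change (Sm (S (2 * h)) (fun x => r (2 * h) x * sin (2 * x (2 * h)%nat))).
      apply (Sm_mult _ (r (2 * h)) (fun x => sin (2 * x (2 * h)%nat))). apply Sm_r; lia.
      apply (Sm_sin _ (fun x => 2 * x (2 * h)%nat)).
      apply (Sm_mult _ (fun _ => 2) (fun x => x (2 * h)%nat)). apply Sm_const. apply Sm_proj; lia.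
    + assert (Hq : (q < 2 * h)%nat) by lia. destruct (Nat.even q) eqn:E.
      * pose proof (even_succ_lt h q E Hq).
        replace (fun x => FF (2 * h) x (S (S q))) with
          (fun x => s q x * cos (x (2 * h)%nat) + - (s (S q) x * sin (x (2 * h)%nat)))
          by (apply functional_extensionality; intro x; unfold FF; rewrite E; reflexivity).
        apply (Sm_plus _ (fun x => s q x * cos (x (2 * h)%nat)) (fun x => - (s (S q) x * sin (x (2 * h)%nat)))).
        -- apply (Sm_mult _ (s q) (fun x => cos (x (2 * h)%nat))). apply Sm_s; lia.
           apply (Sm_cos _ (fun x => x (2 * h)%nat)), Sm_proj; lia.
        -- apply (Sm_opp _ (fun x => s (S q) x * sin (x (2 * h)%nat))).
           apply (Sm_mult _ (s (S q)) (fun x => sin (x (2 * h)%nat))). apply Sm_s; lia.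
           apply (Sm_sin _ (fun x => x (2 * h)%nat)), Sm_proj; lia.
      * replace (fun x => FF (2 * h) x (S (S q))) with
          (fun x => s (pred q) x * sin (x (2 * h)%nat) + s q x * cos (x (2 * h)%nat))
          by (apply functional_extensionality; intro x; unfold FF; rewrite E; reflexivity).
        apply (Sm_plus _ (fun x => s (pred q) x * sin (x (2 * h)%nat)) (fun x => s q x * cos (x (2 * h)%nat))).
        -- apply (Sm_mult _ (s (pred q)) (fun x => sin (x (2 * h)%nat))). apply Sm_s; lia.
           apply (Sm_sin _ (fun x => x (2 * h)%nat)), Sm_proj; lia.
        -- apply (Sm_mult _ (s q) (fun x => cos (x (2 * h)%nat))). apply Sm_s; lia.
           apply (Sm_cos _ (fun x => x (2 * h)%nat)), Sm_proj; lia.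
Qed.

Lemma FF_inv h x y : K_equiv (S (2 * h)) x y ->
  forall j, (j < S (2 * h) + 1)%nat -> FF (2 * h) x j = FF (2 * h) y j.
Proof. intros HK j Hj. unfold K_equiv in HK.
  replace (S (2 * h) - 1)%nat with (2 * h)%nat in HK by lia.
  destruct HK as [HA | [HB1 HB2]].
  - assert (Hcs : forall i, (i <= 2 * h)%nat -> cos (y i) = cos (x i) /\ sin (y i) = sin (x i))
      by (intros; apply same_angle_cs, HA; lia).
    assert (Hr : forall k, (k <= 2 * h)%nat -> r k y = r k x)
      by (intros; apply r_cong; intros; apply Hcs; lia).
    assert (Hs : forall k, (k <= 2 * h)%nat -> s k y = s k x).
    { intros k Hk. unfold s. rewrite Hr by lia. rewrite (proj2 (Hcs k Hk)). reflexivity. }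
    destruct (Hcs (2 * h)%nat ltac:(lia)) as [HCm HSm].
    destruct j as [|[|q]]; unfold FF; cbv beta iota.
    + rewrite !cos_2a, HCm, HSm, Hr by lia. reflexivity.
    + rewrite !sin_2a, HCm, HSm, Hr by lia. reflexivity.
    + destruct (Nat.even q); rewrite !Hs by lia; rewrite HCm, HSm; reflexivity.
  - assert (Hcs : forall i, (i < 2 * h)%nat -> cos (y i) = cos (x i) /\ sin (y i) = - sin (x i)).
    { intros i Hi. destruct (same_angle_cs _ _ (HB1 i Hi)) as [A B].
      rewrite cos_neg in A. rewrite sin_neg in B. auto. }
    assert (Hr : forall k, (k <= 2 * h)%nat -> r k y = r k x)
      by (intros; apply r_cong; intros; apply Hcs; lia).
    assert (Hs : forall k, (k < 2 * h)%nat -> s k y = - s k x).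
    { intros k Hk. unfold s. rewrite Hr by lia. rewrite (proj2 (Hcs k Hk)). ring. }
    destruct (same_angle_cs _ _ HB2) as [HCm HSm].
    rewrite neg_cos in HCm. rewrite neg_sin in HSm.
    destruct j as [|[|q]]; unfold FF; cbv beta iota.
    + rewrite !cos_2a, HCm, HSm, Hr by lia. ring.
    + rewrite !sin_2a, HCm, HSm, Hr by lia. ring.
    + assert (Hq : (q < 2 * h)%nat) by lia. destruct (Nat.even q) eqn:E.
      * pose proof (even_succ_lt h q E Hq).
        rewrite !Hs by lia; rewrite HCm, HSm; ring.
      * rewrite !Hs by lia; rewrite HCm, HSm; ring.
Qed.


Lemma even_S_false q : Nat.even q = true -> Nat.even (S q) = false.
Proof. intro E. rewrite Nat.even_succ, <- Nat.negb_even, E. reflexivity. Qed.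

Lemma odd_pred_even k : Nat.even k = false -> exists p, k = S p /\ Nat.even p = true.
Proof. intro E. destruct k as [|p]. discriminate. exists p. split; auto.
  rewrite Nat.even_succ, <- Nat.negb_even in E. destruct (Nat.even p); auto. Qed.

Lemma inj_core h x y e : e * e = 1 -> r (2 * h) x = r (2 * h) y ->
  cos (y (2 * h)%nat) = e * cos (x (2 * h)%nat) -> sin (y (2 * h)%nat) = e * sin (x (2 * h)%nat) ->
  (forall j, (j < S (2 * h) + 1)%nat -> FF (2 * h) x j = FF (2 * h) y j) ->
  forall k, (k < 2 * h)%nat -> cos (y k) = cos (x k) /\ sin (y k) = e * sin (x k).
Proof. intros He Hr Hc Hs H.
  assert (Hpair : forall q, Nat.even q = true -> (q < 2 * h)%nat ->
     s q y = e * s q x /\ s (S q) y = e * s (S q) x).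
  { intros q E Hq. pose proof (even_succ_lt h q E Hq).
    pose proof (H (S (S q)) ltac:(lia)) as H1. pose proof (H (S (S (S q))) ltac:(lia)) as H2.
    unfold FF in H1, H2. cbv beta iota in H1, H2. rewrite E in H1. rewrite (even_S_false q E) in H2.
    change (pred (S q)) with q in H2.
    rewrite Hc, Hs in H1, H2.
    apply (rot_inv _ _ _ _ (cos (x (2 * h)%nat)) (sin (x (2 * h)%nat)) e); auto.
    apply sc1. }
  apply (down_all x y e (2 * h)); auto.
  intros k Hk. destruct (Nat.even k) eqn:E.
  - apply Hpair; auto.
  - destruct (odd_pred_even k E) as [p [-> Ep]]. apply Hpair; auto. lia.
Qed.

Lemma FF_inj h x y : (forall j, (j < S (2 * h) + 1)%nat -> FF (2 * h) x j = FF (2 * h) y j) ->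
  K_equiv (S (2 * h)) x y.
Proof. intro H.
  pose proof (H 0%nat ltac:(lia)) as H0. pose proof (H 1%nat ltac:(lia)) as H1.
  unfold FF in H0, H1. cbv beta iota in H0, H1.
  pose proof (r_bound (2 * h) x). pose proof (r_bound (2 * h) y).
  destruct (polar_eq (r (2 * h) x) (r (2 * h) y) (2 * x (2 * h)%nat) (2 * y (2 * h)%nat) 1)
    as [Hr [Hc2 Hs2]]; try lra.
  rewrite Rmult_1_l in Hs2.
  destruct (cs_same_angle _ _ Hc2 Hs2) as [k Hk].
  unfold K_equiv. replace (S (2 * h) - 1)%nat with (2 * h)%nat by lia.
  destruct (Z.Even_or_Odd k) as [[j Hj]|[j Hj]]; subst k.
  - rewrite mult_IZR in Hk.
    assert (Hy : y (2 * h)%nat = x (2 * h)%nat + 2 * PI * IZR j) by lra.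
    destruct (cos_sin_Z (x (2 * h)%nat) j) as [Cc Ss]. rewrite <- Hy in Cc, Ss.
    pose proof (inj_core h x y 1 ltac:(ring) Hr ltac:(rewrite Cc; ring) ltac:(rewrite Ss; ring) H) as Hcore.
    left. intros i Hi. destruct (Nat.eq_dec i (2 * h)) as [->|Hne].
    + exists j. exact Hy.
    + destruct (Hcore i ltac:(lia)) as [A B]. apply cs_same_angle; [auto| rewrite B; ring].
  - rewrite plus_IZR, mult_IZR in Hk.
    assert (Hy : y (2 * h)%nat = (x (2 * h)%nat + PI) + 2 * PI * IZR j) by lra.
    destruct (cos_sin_Z (x (2 * h)%nat + PI) j) as [Cc Ss]. rewrite <- Hy in Cc, Ss.
    rewrite neg_cos in Cc. rewrite neg_sin in Ss.
    pose proof (inj_core h x y (-1) ltac:(ring) Hr ltac:(rewrite Cc; ring) ltac:(rewrite Ss; ring) H) as Hcore.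
    right. split.
    + intros i Hi. destruct (Hcore i Hi) as [A B]. apply cs_same_angle.
      rewrite cos_neg; auto. rewrite sin_neg, B; ring.
    + exists j. exact Hy.
Qed.


Lemma FF_imm h x (D : nat -> nat -> R) :
  (forall j i, (j < S (2 * h) + 1)%nat -> (i < S (2 * h))%nat ->
     derivable_pt_lim (fun t => FF (2 * h) (upd x i t) j) (x i) (D j i)) ->
  forall c : nat -> R,
  (forall j, (j < S (2 * h) + 1)%nat -> rsum (S (2 * h)) (fun i => c i * D j i) = 0) ->
  forall i, (i < S (2 * h))%nat -> c i = 0.
Proof. intros HD c Hc.
  pose proof (r_bound (2 * h) x) as Rb.
  pose proof (Hc 0%nat ltac:(lia)) as C0. pose proof (Hc 1%nat ltac:(lia)) as C1.
  rewrite (rsum_ext _ _ (fun i => c i * (dr (2 * h) i x * cos (2 * x (2 * h)%nat)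
        + dx (2 * h) i * (-2 * r (2 * h) x * sin (2 * x (2 * h)%nat))))) in C0.
  2:{ intros i Hi. rewrite (uniqueness_limite _ _ _ _ (HD 0%nat i ltac:(lia) Hi) (PD_FF0 (2 * h) i x)).
      reflexivity. }
  rewrite (rsum_ext _ _ (fun i => c i * (dr (2 * h) i x * sin (2 * x (2 * h)%nat)
        + dx (2 * h) i * (2 * r (2 * h) x * cos (2 * x (2 * h)%nat))))) in C1.
  2:{ intros i Hi. rewrite (uniqueness_limite _ _ _ _ (HD 1%nat i ltac:(lia) Hi) (PD_FF1 (2 * h) i x)).
      reflexivity. }
  rewrite (rsum_lin2 _ c (fun i => dr (2 * h) i x) (fun i => dx (2 * h) i)) in C0, C1.
  cbv beta in C0, C1. rewrite rsum_dx in C0, C1 by lia.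
  set (Rm := rsum (S (2 * h)) (fun i => c i * dr (2 * h) i x)) in *.
  destruct (rot_zero Rm (2 * r (2 * h) x * c (2 * h)%nat) (cos (2 * x (2 * h)%nat)) (sin (2 * x (2 * h)%nat)))
    as [HRm Hcm0]; [apply sc1| lra| lra|].
  assert (Hcm : c (2 * h)%nat = 0).
  { apply (Rmult_eq_reg_l (2 * r (2 * h) x)); [rewrite Rmult_0_r; lra| lra]. }
  assert (Hsig : forall q, Nat.even q = true -> (q < 2 * h)%nat ->
    rsum (S (2 * h)) (fun i => c i * ds q i x) = 0 /\ rsum (S (2 * h)) (fun i => c i * ds (S q) i x) = 0).
  { intros q E Hq. pose proof (even_succ_lt h q E Hq).
    pose proof (Hc (S (S q)) ltac:(lia)) as C2. pose proof (Hc (S (S (S q))) ltac:(lia)) as C3.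
    rewrite (rsum_ext _ _ (fun i => c i * (ds q i x * cos (x (2 * h)%nat) + ds (S q) i x * (- sin (x (2 * h)%nat))
            + dx (2 * h) i * (- (s q x * sin (x (2 * h)%nat)) - s (S q) x * cos (x (2 * h)%nat))))) in C2.
    2:{ intros i Hi. rewrite (uniqueness_limite _ _ _ _ (HD (S (S q)) i ltac:(lia) Hi) (PD_FFev (2 * h) q i E x)).
        reflexivity. }
    rewrite (rsum_ext _ _ (fun i => c i * (ds q i x * sin (x (2 * h)%nat) + ds (S q) i x * cos (x (2 * h)%nat)
            + dx (2 * h) i * (s q x * cos (x (2 * h)%nat) - s (S q) x * sin (x (2 * h)%nat))))) in C3.
    2:{ intros i Hi. rewrite (uniqueness_limite _ _ _ _ (HD (S (S (S q))) i ltac:(lia) Hi)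
          (PD_FFodd (2 * h) (S q) i (even_S_false q E) x)). reflexivity. }
    rewrite (rsum_lin3 _ c (fun i => ds q i x) (fun i => ds (S q) i x) (fun i => dx (2 * h) i)) in C2, C3.
    cbv beta in C2, C3. rewrite rsum_dx in C2, C3 by lia. rewrite Hcm in C2, C3.
    apply (rot_zero _ _ (cos (x (2 * h)%nat)) (sin (x (2 * h)%nat))); [apply sc1| lra| lra]. }
  assert (Hall : forall k, (k < 2 * h)%nat -> sig (S (2 * h)) c x k = 0).
  { intros k Hk. unfold sig. destruct (Nat.even k) eqn:E.
    - apply Hsig; auto.
    - destruct (odd_pred_even k E) as [p [-> Ep]]. apply Hsig; auto. lia. }
  intros i Hi. destruct (Nat.eq_dec i (2 * h)) as [->|Hne]; [exact Hcm|].
  apply (imm_all (S (2 * h)) c x (2 * h)); auto; lia.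
Qed.

Theorem mainTheorem12 (n : nat) (Hodd : Nat.Odd n) :
  exists F : vec -> vec, smooth_embedding_K n F.
Proof.
  destruct Hodd as [h ->]. replace (2 * h + 1)%nat with (S (2 * h)) by lia.
  exists (fun x j => FF (2 * h) x j). split; [|split; [|split]].
  - intros j Hj. apply FF_smooth; auto.
  - intros x y HK j Hj. apply FF_inv; auto.
  - intros x y H. apply FF_inj; auto.
  - intros x D HD c Hc i Hi. exact (FF_imm h x D HD c Hc i Hi).
Qed.
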